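(* Let $n\ge3$ and let $A$ be a set of $m$ vertices of $C_n$ with $2\le m\le n$. The following are equivalent: (1) $A$ is a maximizer of $W$ on $C_n$; (2) $A$ is a local maximizer of $W$ on $C_n$; (3) if $m$ is odd then $\mathrm{supp}(\sigma^*_{\lfloor m/2\rfloor}(A))\subseteq\{1,\dots,\lfloor n/2\rfloor\}$, and if $m$ is even then $\mathrm{supp}(\sigma^*_{m/2}(A))\subseteq\{\lfloor n/2\rfloor,\lceil n/2\rceil\}$; (4) for all integers $k$ with $1\le k<\frac m2$ we have $\sigma_k(A)=\sigma^*_k(A)$, and, if $m$ is even, $\mathrm{supp}(\sigma_{m/2}(A))=\{\lfloor n/2\rfloor\}$.
   Context: $C_n$ has vertex set $\{0,\dots,n-1\}$ with $i$ adjacent to $i+1\bmod n$. $d(u,v)$ is geodesic distance; $d^*(u,v)$ is the least non-negative integer congruent to $v-u$ mod $n$. $W(A)=\sum_{\{u,v\}\subseteq A,u\ne v}d(u,v)$ over unordered pairs. $A$ is a maximizer of $W$ if $W(A)=\max\{W(B):|B|=|A|\}$; a perturbation of $A$ is $(A\setminus\{u\})\cup\{v\}$ with $u\in A$, $v\notin A$, $uv$ an edge, and $A$ is a local maximizer if $W(A)\ge W(B)$ for every perturbation $B$. For $A=\{a_0<\dots<a_{m-1}\}$, $\mathrm{span}_A(a_i,a_j)$ is the least positive integer congruent to $j-i$ mod $m$; $\sigma_k(A)=[\,d(u,v):u,v\in A,u\ne v,\mathrm{span}_A(u,v)=k\,]$ and $\sigma^*_k(A)=[\,d^*(u,v):u,v\in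 A,u\ne v,\mathrm{span}_A(u,v)=k\,]$ are multisets over ordered pairs; $\mathrm{supp}$ denotes the underlying set of a multiset. *)

(* Defs.v *)
From mathcomp Require Import all_boot.
Set Implicit Arguments. Unset Strict Implicit. Unset Printing Implicit Defensive.

Section Cycle.
Variable n : nat.

Definition dstar (u v : 'I_n) : nat := (val v + n - val u) %% n.

Definition dist (u v : 'I_n) : nat := minn (dstar u v) (dstar v u).

Definition adj (u v : 'I_n) : bool :=
  (val v == (val u).+1 %% n) || (val u == (val v).+1 %% n).

Definition W (A : {set 'I_n}) : nat :=
  \sum_(u in A) \sum_(v in A | val u < val v) dist u v.

Definition maximizer (A : {set 'I_n}) : Prop :=
  forall B : {set 'I_n}, #|B| = #|A| -> W B <= W A.

Definition perturbation (A : {set 'I_n}) (u v : 'I_n) : {set 'I_n} :=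
  (A :\ u) :|: [set v].

Definition local_maximizer (A : {set 'I_n}) : Prop :=
  forall u v : 'I_n, u \in A -> v \notin A -> adj u v ->
    W (perturbation A u v) <= W A.

(* position i of a_i in A = {a_0 < ... < a_{m-1}} *)
Definition pos (A : {set 'I_n}) (u : 'I_n) : nat :=
  #|[set w in A | val w < val u]|.

(* span_A(a_i,a_j): least positive integer congruent to j - i mod m
   (used only for distinct u, v in A, where j <> i) *)
Definition span (A : {set 'I_n}) (u v : 'I_n) : nat :=
  let m := #|A| in
  if pos A u < pos A v then pos A v - pos A u else pos A v + m - pos A u.

Definition span_pairs (A : {set 'I_n}) (k : nat) : pred ('I_n * 'I_n) :=
  [pred p | [&& p.1 \in A, p.2 \in A, p.1 != p.2 & span A p.1 p.2 == k]].

(* multisets sigma_k(A), sigma*_k(A), as sequences considered up to perm_eq *)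
Definition sigma (A : {set 'I_n}) (k : nat) : seq nat :=
  [seq dist p.1 p.2 | p in span_pairs A k].

Definition sigmastar (A : {set 'I_n}) (k : nat) : seq nat :=
  [seq dstar p.1 p.2 | p in span_pairs A k].

End Cycle.

(* Main.v *)
Require Import Defs.
From mathcomp Require Import all_boot zify.
Set Implicit Arguments. Unset Strict Implicit. Unset Printing Implicit Defensive.

Lemma valE n (x : 'I_n) : val x = nat_of_ord x. Proof. by []. Qed.

Lemma dstarE n (u v : 'I_n) : dstar u v = if u <= v then v - u else v + n - u.
Proof.
rewrite /dstar !valE; have := ltn_ord u; have := ltn_ord v.
case: (leqP u v) => h1 h2 h3.
- rewrite -addnBAC // -modnDmr modnn addn0 modn_small //; lia.
- rewrite modn_small //; lia.
Qed.

Ltac ordb x := have := ltn_ord x.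
Ltac dsolve := rewrite ?dstarE; repeat (case: ifPn => ?); lia.

Lemma neq_nat n (u v : 'I_n) : u != v -> nat_of_ord u <> nat_of_ord v.
Proof. by move=> h e; move/eqP: h; apply; apply: val_inj. Qed.

Lemma dstar_lt n (u v : 'I_n) : dstar u v < n.
Proof. ordb u; ordb v; dsolve. Qed.

Lemma dstar_eq0 n (u v : 'I_n) : (dstar u v == 0) = (u == v).
Proof.
ordb u; ordb v => h1 h2; apply/eqP/eqP => [|->].
- move=> h; apply: val_inj => /=; move: h; dsolve.
- dsolve.
Qed.

Lemma dstar_sym n (u v : 'I_n) : u != v -> dstar u v + dstar v u = n.
Proof. move/neq_nat; ordb u; ordb v; dsolve. Qed.

Lemma dstar_inj n (u : 'I_n) : injective (dstar u).
Proof. move=> v w; ordb u; ordb v; ordb w => h1 h2 h3 h; apply: val_inj => /=; move: h; dsolve. Qed.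

Lemma dstar_injl n (x : 'I_n) : injective (fun y => dstar y x).
Proof. move=> v w; ordb x; ordb v; ordb w => h1 h2 h3 /= h; apply: val_inj => /=; move: h; dsolve. Qed.

Lemma dstar_add n (u y x : 'I_n) : dstar u y <= dstar u x -> dstar u y + dstar y x = dstar u x.
Proof. ordb u; ordb y; ordb x; dsolve. Qed.

Lemma dist_sym n (u v : 'I_n) : dist u v = dist v u.
Proof. by rewrite /dist minnC. Qed.
Lemma dist_uu n (u : 'I_n) : dist u u = 0.
Proof. by move: (dstar_eq0 u u); rewrite eqxx /dist => /eqP ->. Qed.

Lemma ord_pos n (u : 'I_n) : 0 < n.
Proof. exact: leq_ltn_trans (leq0n u) (ltn_ord u). Qed.

Definition prd n (u : 'I_n) : 'I_n := Ordinal (ltn_pmod (u + n - 1) (ord_pos u)).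

Lemma prdE n (u : 'I_n) : nat_of_ord (prd u) = if nat_of_ord u == 0 then n - 1 else u - 1.
Proof.
rewrite /=; have := ltn_ord u; case: eqP => [->|h] h1.
- by rewrite add0n modn_small //; lia.
- rewrite (_ : u + n - 1 = (u - 1) + n); last lia.
  rewrite modnDr modn_small //; lia.
Qed.

Lemma prd_spec n (u : 'I_n) : (nat_of_ord u = 0 /\ nat_of_ord (prd u) = n - 1) \/ (0 < nat_of_ord u /\ nat_of_ord (prd u) = u - 1).
Proof. rewrite prdE; case: eqP => h; [left|right]; lia. Qed.

Ltac psolve_for u := have := prd_spec u; rewrite ?dstarE; repeat (case: ifPn => ?); lia.

Lemma prd_neq n (u : 'I_n) : 2 <= n -> prd u != u.
Proof. move=> hn; apply/eqP => /(congr1 (@nat_of_ord n)); ordb u; psolve_for u. Qed.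

Lemma dstar_prd_u n (u : 'I_n) : 2 <= n -> dstar (prd u) u = 1.
Proof. move=> hn; ordb u; psolve_for u. Qed.

Lemma dstar_u_prd n (u : 'I_n) : dstar u (prd u) = n - 1.
Proof. ordb u; psolve_for u. Qed.

Lemma dstar_prd n (u w : 'I_n) : w != prd u -> dstar (prd u) w = dstar u w + 1.
Proof. move/neq_nat; ordb u; ordb w; psolve_for u. Qed.

Lemma dstar_prdl n (y x : 'I_n) : y != x -> dstar y (prd x) = dstar y x - 1.
Proof. move/neq_nat; ordb y; ordb x; psolve_for x. Qed.

Lemma adj_prd n (u : 'I_n) : adj u (prd u).
Proof.
apply/orP; right; apply/eqP; rewrite !valE; ordb u; have hp := ord_pos u.
case: (prd_spec u) => [[h1 ->]|[h1 ->]] h2.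
- rewrite h1 (_ : (n - 1).+1 = n); last lia. by rewrite modnn.
- rewrite modn_small //; lia.
Qed.

Lemma ord_eqE n (x y : 'I_n) : (x == y) = (nat_of_ord x == nat_of_ord y).
Proof. by []. Qed.


Lemma card_sumS (T : finType) (S : {set T}) (P : T -> bool) :
  #|[set y in S | P y]| = \sum_(y in S) (P y : nat).
Proof.
rewrite -sum1_card big_mkcond /= [RHS]big_mkcond /=.
by apply: eq_bigr => y _; rewrite !inE; case: (y \in S); case: (P y).
Qed.

Definition rk (T : finType) (S : {set T}) (f : T -> nat) (w : T) :=
  #|[set y in S | f y <= f w]|.

Lemma rk_le (T : finType) (S : {set T}) (f : T -> nat) w z :
  w \in S -> z \in S -> (rk S f w <= rk S f z) = (f w <= f z).
Proof.
move=> hw hz; case: (leqP (f w) (f z)) => h.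
- apply: subset_leq_card; apply/subsetP => y; rewrite !inE => /andP[-> h2] /=.
  exact: leq_trans h2 h.
- apply/negbTE; rewrite -ltnNge; apply: proper_card; apply/properP; split.
  + apply/subsetP => y; rewrite !inE => /andP[-> h2] /=.
    exact: leq_trans h2 (ltnW h).
  + by exists w; rewrite !inE ?hw ?leqnn // leqNgt h.
Qed.

Lemma rk_lt (T : finType) (S : {set T}) (f : T -> nat) w z :
  w \in S -> z \in S -> (rk S f w < rk S f z) = (f w < f z).
Proof. by move=> hw hz; rewrite !ltnNge (rk_le f hz hw). Qed.

Lemma rk_inj (T : finType) (S : {set T}) (f : T -> nat) w z :
  injective f -> w \in S -> z \in S -> rk S f w = rk S f z -> w = z.
Proof.
move=> hf hw hz e; apply: hf; apply/eqP; rewrite eqn_leq -(rk_le f hw hz) -(rk_le f hz hw).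
by rewrite e leqnn.
Qed.

Lemma rk_bound (T : finType) (S : {set T}) (f : T -> nat) w :
  w \in S -> 0 < rk S f w <= #|S|.
Proof.
move=> hw; apply/andP; split.
- by apply/card_gt0P; exists w; rewrite !inE hw leqnn.
- by apply: subset_leq_card; apply/subsetP => y; rewrite inE => /andP[].
Qed.

Lemma rk_perm (T : finType) (S : {set T}) (f : T -> nat) :
  injective f -> perm_eq (map (rk S f) (enum S)) (iota 1 #|S|).
Proof.
move=> hf.
have hu : uniq (map (rk S f) (enum S)).
  rewrite map_inj_in_uniq ?enum_uniq // => w z; rewrite !mem_enum.
  by move=> hw hz; apply: rk_inj.
have hs : {subset map (rk S f) (enum S) <= iota 1 #|S|}.
  move=> j /mapP[w]; rewrite mem_enum => hw ->; rewrite mem_iota.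
  have := rk_bound f hw; lia.
have hsz : size (iota 1 #|S|) <= size (map (rk S f) (enum S)).
  by rewrite size_iota size_map -cardE.
have [_ he] := uniq_min_size hu hs hsz.
by apply: uniq_perm => //; apply: iota_uniq.
Qed.

Lemma rk_sum (T : finType) (S : {set T}) (f : T -> nat) (F : nat -> nat) :
  injective f -> \sum_(w in S) F (rk S f w) = \sum_(j <- iota 1 #|S|) F j.
Proof.
move=> hf; rewrite -(perm_big _ (rk_perm S hf)) big_map.
by rewrite big_enum.
Qed.

Lemma rk_card (T : finType) (S : {set T}) (f : T -> nat) (P : nat -> bool) :
  injective f -> #|[set w in S | P (rk S f w)]| = \sum_(j <- iota 1 #|S|) (P j : nat).
Proof. by move=> hf; rewrite card_sumS (rk_sum _ (fun j => P j : nat)). Qed.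

Lemma rk_ex (T : finType) (S : {set T}) (f : T -> nat) j :
  injective f -> 0 < j <= #|S| -> exists2 w, w \in S & rk S f w = j.
Proof.
move=> hf hj; have : j \in map (rk S f) (enum S).
  by rewrite (perm_mem (rk_perm S hf)) mem_iota; lia.
by case/mapP => w; rewrite mem_enum => hw ->; exists w.
Qed.

Lemma rk_thr (T : finType) (S : {set T}) (f : T -> nat) w a :
  w \in S -> (a <= f w) = (#|[set y in S | f y < a]| < rk S f w).
Proof.
move=> hw; case: (leqP a (f w)) => h.
- apply/esym; apply: proper_card; apply/properP; split.
  + apply/subsetP => y; rewrite !inE => /andP[-> h2] /=; lia.
  + by exists w; rewrite !inE ?hw ?leqnn //= -leqNgt.
- apply/esym/negbTE; rewrite -leqNgt; apply: subset_leq_card.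
  apply/subsetP => y; rewrite !inE => /andP[-> h2] /=; lia.
Qed.

Lemma sum_iota_trunc (F : nat -> nat) K s :
  K <= s -> (forall j, K < j -> F j = 0) ->
  \sum_(j <- iota 1 s) F j = \sum_(j <- iota 1 K) F j.
Proof.
move=> hK hF; rewrite -(subnKC hK) iotaD big_cat /=.
have -> : \sum_(j <- iota (1 + K) (s - K)) F j = 0.
  rewrite big_seq big1 // => j; rewrite mem_iota => hj; apply: hF; lia.
by rewrite addn0.
Qed.

Lemma sum_iota_const K c : \sum_(j <- iota 1 K) c = K * c.
Proof. by rewrite big_const_seq count_predT size_iota iter_addn_0 mulnC. Qed.

Lemma sum_iota_le K s : K <= s -> \sum_(j <- iota 1 s) (j <= K : nat) = K.
Proof.
move=> hK; rewrite (@sum_iota_trunc (fun j => (j <= K : nat)) K s hK); last first.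
  by move=> j hj; rewrite leqNgt hj.
rewrite big_seq (eq_bigr (fun _ => 1)) -?big_seq ?sum_iota_const ?muln1 //.
by move=> j; rewrite mem_iota => hj; have -> : j <= K by lia.
Qed.

Lemma card_le_inj (T : finType) (X : {set T}) (f : T -> nat) D :
  injective f -> (forall y, y \in X -> 0 < f y <= D) -> #|X| <= D.
Proof.
move=> hf hX; rewrite cardE -(size_map f) -(size_iota 1 D).
apply: uniq_leq_size; first by rewrite map_inj_uniq ?enum_uniq.
move=> j /mapP[y]; rewrite mem_enum => hy ->; rewrite mem_iota; have := hX y hy; lia.
Qed.


Ltac nsolve := rewrite ?dstarE ?ord_eqE ?valE; repeat (case: ifPn => ?); lia.

Definition sp n (A : {set 'I_n}) (u w : 'I_n) := rk (A :\ u) (dstar u) w.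

Lemma sum_eq1 (T : finType) (A : {set T}) u : u \in A -> \sum_(y in A) (y == u : nat) = 1.
Proof.
move=> hu; rewrite (bigD1 u) //= eqxx big1 // => y /andP[_ /negbTE ->]; done.
Qed.

Lemma sp_sum n (A : {set 'I_n}) u w :
  sp A u w = \sum_(y in A) ((y != u) && (dstar u y <= dstar u w) : nat).
Proof.
rewrite /sp /rk -card_sumS; apply: eq_card => y; rewrite !inE.
by case: (y != u); case: (y \in A).
Qed.

Lemma pos_sum n (A : {set 'I_n}) x :
  pos A x = \sum_(y in A) (val y < val x : nat).
Proof. by rewrite /pos card_sumS. Qed.

Lemma span_sp n (A : {set 'I_n}) u w :
  u \in A -> w \in A -> u != w -> span A u w = sp A u w.
Proof.
move=> hu hw huw.
have hwA : w \in A :\ u by rewrite !inE eq_sym huw.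
have hb := rk_bound (dstar u) hwA; rewrite -/(sp A u w) in hb.
have hc : #|A| = #|A :\ u|.+1 by rewrite (cardsD1 u A) hu.
have h1 := sum_eq1 hu; have h2 := sum_eq1 hw; have h3 : \sum_(y in A) 1 = #|A| by rewrite sum1_card.
rewrite /span; have := neq_nat huw; ordb u; ordb w => hu' hw' hne.
case: (ltnP u w) => hlt.
- have e : sp A u w + pos A u + \sum_(y in A) (y == u : nat)
           = pos A w + \sum_(y in A) (y == w : nat).
    rewrite sp_sum !pos_sum -!big_split /=; apply: eq_bigr => y _.
    ordb y; move: hlt hu' hw' hne; nsolve.
  rewrite h1 h2 in e; case: ifPn => ?; lia.
- have e : sp A u w + pos A u + \sum_(y in A) (y == u : nat)
           = pos A w + \sum_(y in A) (y == w : nat) + \sum_(y in A) 1.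
    rewrite sp_sum !pos_sum -!big_split /=; apply: eq_bigr => y _.
    ordb y; move: hlt hu' hw' hne; nsolve.
  rewrite h1 h2 h3 in e; set D := #|A :\ u| in hc hb; case: ifPn => ?; lia.
Qed.

Lemma mem_sigmastar n (A : {set 'I_n}) k x :
  x \in sigmastar A k ->
  exists u w, [/\ u \in A, w \in A, u != w, span A u w = k & x = dstar u w].
Proof.
case/mapP => [[u w]]; rewrite mem_enum /= => /and4P[hu hw huw /eqP hk] ->.
by exists u, w.
Qed.

Lemma mem_sigma n (A : {set 'I_n}) k x :
  x \in sigma A k ->
  exists u w, [/\ u \in A, w \in A, u != w, span A u w = k & x = dist u w].
Proof.
case/mapP => [[u w]]; rewrite mem_enum /= => /and4P[hu hw huw /eqP hk] ->.
by exists u, w.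
Qed.

Lemma sigmastar_intro n (A : {set 'I_n}) k u w :
  u \in A -> w \in A -> u != w -> span A u w = k -> dstar u w \in sigmastar A k.
Proof.
move=> hu hw huw hk; apply/mapP; exists (u, w) => //.
by rewrite mem_enum /= inE /= hu hw huw hk eqxx.
Qed.

Lemma sigma_intro n (A : {set 'I_n}) k u w :
  u \in A -> w \in A -> u != w -> span A u w = k -> dist u w \in sigma A k.
Proof.
move=> hu hw huw hk; apply/mapP; exists (u, w) => //.
by rewrite mem_enum /= inE /= hu hw huw hk eqxx.
Qed.

Lemma W_full n (A : {set 'I_n}) :
  W A = \sum_(u in A) \sum_(w in A) (if val u < val w then dist u w else 0).
Proof. by apply: eq_bigr => u _; rewrite big_mkcondr. Qed.

Lemma W2 n (A : {set 'I_n}) : (W A).*2 = \sum_(u in A) \sum_(w in A) dist u w.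
Proof.
rewrite W_full -addnn.
have e : \sum_(u in A) \sum_(w in A) (if val u < val w then dist u w else 0) =
          \sum_(u in A) \sum_(w in A) (if val w < val u then dist w u else 0).
  exact: exchange_big.
rewrite {2}e.
rewrite -big_split; apply: eq_bigr => u _; rewrite -big_split; apply: eq_bigr => w _ /=.
case: (ltngtP (val u) (val w)) => h.
- by rewrite addn0.
- by rewrite add0n dist_sym.
- by rewrite (val_inj h) dist_uu.
Qed.

Lemma W_add n (C : {set 'I_n}) u :
  u \notin C -> W (u |: C) = W C + \sum_(w in C) dist u w.
Proof.
move=> hu; apply: double_inj; rewrite doubleD !W2 big_setU1 //.
rewrite big_setU1 // dist_uu /=.
have -> : \sum_(i in C) \sum_(w in u |: C) dist i w = \sum_(i in C) (dist i u + \sum_(w in C) dist i w) by apply: eq_bigr => x _; rewrite big_setU1.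
rewrite big_split /=.
have -> : \sum_(i in C) dist i u = \sum_(w in C) dist u w.
  by apply: eq_bigr => x _; rewrite dist_sym.
set S1 := \sum_(i in C) dist u i. set S2 := \sum_(i in C) \sum_(w in C) dist i w. rewrite -!addnn; lia.
Qed.


Lemma sp_le_dstar n (A : {set 'I_n}) u w : w != u -> sp A u w <= dstar u w.
Proof.
move=> hw; apply: (card_le_inj (@dstar_inj n u)) => y; rewrite !inE => /andP[/andP[hyu _] hy].
rewrite hy andbT lt0n dstar_eq0 eq_sym; done.
Qed.

Lemma sp_bound n (A : {set 'I_n}) u w :
  u \in A -> w \in A -> w != u -> 0 < sp A u w /\ sp A u w < #|A|.
Proof.
move=> hu hw hwu; have hw' : w \in A :\ u by rewrite !inE hwu.
have := rk_bound (dstar u) hw'; rewrite -/(sp A u w).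
have := cardsD1 u A; rewrite hu; set D := #|A :\ u|; lia.
Qed.

Lemma sp_max n (A : {set 'I_n}) u : u \in A -> prd u \in A -> 2 <= n -> sp A u (prd u) = #|A| - 1.
Proof.
move=> hu hv hn; rewrite /sp /rk (cardsD1 u A) hu add1n subn1 /=.
apply: eq_card => y; rewrite !inE dstar_u_prd.
have := dstar_lt u y => h; rewrite (_ : dstar u y <= n - 1) ?andbT //; lia.
Qed.

Lemma sp_prd_u n (A : {set 'I_n}) u : u \in A -> 2 <= n -> sp A (prd u) u = 1.
Proof.
move=> hu hn; have hne : u != prd u by rewrite eq_sym prd_neq.
have h1 := sp_le_dstar A hne.
rewrite dstar_prd_u // in h1.
have : 0 < sp A (prd u) u.
  apply/card_gt0P; exists u; rewrite !inE eq_sym prd_neq // hu leqnn //.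
lia.
Qed.

Lemma sp_shift n (A : {set 'I_n}) u w :
  2 <= n -> u \in A -> w != u -> w != prd u ->
  sp A (prd u) w = sp A u w + 1.
Proof.
move=> hn hu hwu hwv; rewrite !sp_sum -(sum_eq1 hu) -big_split /=.
apply: eq_bigr => y _.
have ew := dstar_prd hwv; have ewl := dstar_lt (prd u) w.
case: (eqVneq y u) => [->|hyu].
- rewrite eq_sym prd_neq // dstar_prd_u // ew /=; lia.
case: (eqVneq y (prd u)) => [->|hyv].
- rewrite /= dstar_u_prd; lia.
- rewrite /= dstar_prd //; lia.
Qed.

Definition cc (m : nat) := 2 - odd m.

Definition shortp n (A : {set 'I_n}) (u z : 'I_n) :=
  [&& z \in A, z != u, sp A u z == #|A| - #|A|./2 & (dstar u z).*2 + cc #|A| <= n].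

Lemma pert_W n (A : {set 'I_n}) u v : u \in A -> v \notin A ->
  W (perturbation A u v) + \sum_(w in A :\ u) dist u w = W A + \sum_(w in A :\ u) dist v w.
Proof.
move=> hu hv.
have hu' : u \notin A :\ u by rewrite !inE eqxx.
have h1 := W_add hu'.
rewrite setD1K // in h1.
have hv' : v \notin A :\ u by rewrite !inE (negbTE hv) andbF.
have h2 := W_add hv'.
rewrite /perturbation setUC h1 h2.
set a := W (A :\ u); set b := \sum_(w in A :\ u) dist u w; set c := \sum_(w in A :\ u) dist v w.
lia.
Qed.

Lemma dist_prd_pt n (u w : 'I_n) : 2 <= n -> w != u -> w != prd u ->
  dist (prd u) w + (n <= (dstar u w).*2) = dist u w + ((dstar u w).*2 + 2 <= n).
Proof.
move=> hn hwu hwv; rewrite /dist.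
have e1 := dstar_prd hwv.
have e2 : dstar (prd u) w + dstar w (prd u) = n by apply: dstar_sym; rewrite eq_sym.
have e3 : dstar u w + dstar w u = n by apply: dstar_sym; rewrite eq_sym.
have := dstar_lt (prd u) w; lia.
Qed.

Lemma stepA n (A : {set 'I_n}) u z :
  2 <= n -> 2 <= #|A| -> u \in A -> prd u \notin A -> shortp A u z ->
  \sum_(w in A :\ u) dist u w < \sum_(w in A :\ u) dist (prd u) w.
Proof.
move=> hn hm hu hv /and4P[hz hzu /eqP hsp hd].
have hC : #|A :\ u| + 1 = #|A| by rewrite (cardsD1 u A) hu addnC.
have hzC : z \in A :\ u by rewrite !inE hzu hz.
move: hsp hd hC hm; rewrite /sp /cc.
set m := #|A|; set C := A :\ u; set R := rk C (dstar u) => hsp hd hC hm.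
have ptP : forall w, w \in C -> (R w <= m./2 : nat) <= ((dstar u w).*2 + 2 <= n).
  move=> w hw; case: (leqP (R w) m./2) => // hr.
  case: (ltnP (R w) (R z)) => h.
  - rewrite /R (rk_lt _ hw hzC) in h; lia.
  - have hwz : w = z.
      apply: (rk_inj (@dstar_inj n u) hw hzC); change (R w = R z); lia.
    rewrite hwz; lia.
have ptN : forall w, w \in C -> (n <= (dstar u w).*2) + (R w <= m - m./2 : nat) <= 1.
  move=> w hw; case: (leqP (R w) (R z)) => h.
  - rewrite /R (rk_le _ hw hzC) in h; lia.
  - lia.
have pt : forall w, w \in C ->
    dist (prd u) w + (n <= (dstar u w).*2) = dist u w + ((dstar u w).*2 + 2 <= n).
  move=> w; rewrite !inE => /andP[hwu hw]; apply: dist_prd_pt => //.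
  by apply/eqP => e; move: hw; rewrite e (negbTE hv).
have eP : \sum_(w in C) (R w <= m./2 : nat) = m./2.
  rewrite -card_sumS (@rk_card _ C (dstar u) (fun j => j <= m./2) (@dstar_inj n u)).
  apply: sum_iota_le; lia.
have eN : \sum_(w in C) (R w <= m - m./2 : nat) = m - m./2.
  rewrite -card_sumS (@rk_card _ C (dstar u) (fun j => j <= m - m./2) (@dstar_inj n u)).
  apply: sum_iota_le; lia.
have e1 : \sum_(w in C) dist (prd u) w + \sum_(w in C) (n <= (dstar u w).*2 : nat) =
          \sum_(w in C) dist u w + \sum_(w in C) ((dstar u w).*2 + 2 <= n : nat).
  by rewrite -!big_split; apply: eq_bigr.
have l1 : \sum_(w in C) (R w <= m./2 : nat) <= \sum_(w in C) ((dstar u w).*2 + 2 <= n : nat).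
  by apply: leq_sum.
have l2 : \sum_(w in C) ((n <= (dstar u w).*2) + (R w <= m - m./2 : nat)) <= \sum_(w in C) 1.
  by apply: leq_sum.
rewrite big_split /= sum1_card in l2.
move: e1 l1 l2 eP eN hC.
set a := \sum_(w in C) dist (prd u) w; set b := \sum_(w in C) dist u w.
set c := \sum_(w in C) (n <= (dstar u w).*2 : nat).
set d := \sum_(w in C) ((dstar u w).*2 + 2 <= n : nat).
set e := \sum_(w in C) (R w <= m./2 : nat).
set f := \sum_(w in C) (R w <= m - m./2 : nat).
set D := #|C|.
lia.
Qed.

Lemma stepB n (A : {set 'I_n}) u z :
  2 <= n -> 2 <= #|A| -> u \in A -> prd u \in A -> shortp A u z ->
  exists z', shortp A (prd u) z'.
Proof.
move=> hn hm hu hv /and4P[hz hzu /eqP hsp hd].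
have hC : #|A :\ u| + 1 = #|A| by rewrite (cardsD1 u A) hu addnC.
have hzC : z \in A :\ u by rewrite !inE hzu hz.
have hdz : 0 < dstar u z by rewrite lt0n dstar_eq0 eq_sym.
have hvu : u != prd u by rewrite eq_sym prd_neq.
case: (leqP (#|A| - #|A|./2) 1) => hc.
- exists u; apply/and4P; split => //.
  + rewrite sp_prd_u //; apply/eqP; lia.
  + rewrite dstar_prd_u // /cc; rewrite /cc in hd; lia.
- have [z' hz'C hz'r] : exists2 z', z' \in A :\ u & rk (A :\ u) (dstar u) z' = #|A| - #|A|./2 - 1.
    apply: rk_ex; first exact: dstar_inj.
    set D := #|A :\ u| in hC *; lia.
  move: (hz'C); rewrite !inE => /andP[hz'u hz'A].
  have hz'v : z' != prd u.
    apply/eqP => e; move: hz'r; rewrite e -/(sp A u (prd u)) sp_max //; lia.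
  exists z'; apply/and4P; split => //.
  + rewrite sp_shift // /sp hz'r; apply/eqP; lia.
  + have hlt : dstar u z' < dstar u z.
      by rewrite -(rk_lt _ hz'C hzC) hz'r -/(sp A u z) hsp; lia.
    rewrite dstar_prd // /cc; rewrite /cc in hd; lia.
Qed.

Lemma closure_all n (L : {set 'I_n}) x0 :
  x0 \in L -> (forall x, x \in L -> prd x \in L) -> forall y, y \in L.
Proof.
move=> h0 hc y.
suff: forall d x, x \in L -> dstar y x = d -> y \in L by move/(_ _ x0 h0 erefl).
elim=> [|d IH] x hx hd.
- by move/eqP: hd; rewrite dstar_eq0 => /eqP ->.
- have hyx : y != x by rewrite -dstar_eq0 hd.
  by apply: (IH (prd x) (hc x hx)); rewrite dstar_prdl // hd; lia.
Qed.

Lemma no_short n (A : {set 'I_n}) u z :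
  2 <= n -> 2 <= #|A| -> local_maximizer A -> u \in A -> shortp A u z -> False.
Proof.
move=> hn hm hloc hu hs.
pose L := [set x | (x \in A) && [exists z, shortp A x z]].
have hL : forall y, y \in L.
  apply: (closure_all (x0 := u)).
    by rewrite inE hu; apply/existsP; exists z.
  move=> x; rewrite inE => /andP[hx /existsP[zx hzx]].
  case: (boolP (prd x \in A)) => hv.
  - have [z' hz'] := stepB hn hm hx hv hzx.
    by rewrite inE hv; apply/existsP; exists z'.
  - have h1 := stepA hn hm hx hv hzx.
    have h2 := hloc x (prd x) hx hv (adj_prd x).
    have h3 := pert_W hx hv.
    move: h1 h2 h3.
    set a := \sum_(w in A :\ x) dist x w; set b := \sum_(w in A :\ x) dist (prd x) w.
    set c := W (perturbation A x (prd x)); set d := W A.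
    lia.
have eA : A = setT by apply/setP => y; have := hL y; rewrite !inE => /andP[-> _].
move: hs => /and4P[hz hzu /eqP hsp hd].
have := sp_le_dstar A hzu; rewrite hsp.
have : #|A| = n by rewrite eA cardsT card_ord.
move: hd; rewrite /cc; set m := #|A|; lia.
Qed.


Lemma pos_lt n (A : {set 'I_n}) (u w : 'I_n) : u \in A -> nat_of_ord u < nat_of_ord w -> pos A u < pos A w.
Proof.
move=> hu h; apply: proper_card; apply/properP; split.
- apply/subsetP => y; rewrite !inE !valE => /andP[-> hy] /=; lia.
- by exists u; rewrite !inE !valE ?hu ?h // ltnn.
Qed.

Lemma pos_le n (A : {set 'I_n}) u : pos A u <= #|A|.
Proof. by apply: subset_leq_card; apply/subsetP => y; rewrite inE => /andP[]. Qed.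

Lemma span_sym n (A : {set 'I_n}) u w :
  u \in A -> w \in A -> u != w -> span A u w + span A w u = #|A|.
Proof.
move=> hu hw huw; rewrite /span.
have := pos_le A u; have := pos_le A w.
have := neq_nat huw.
case: (ltngtP (nat_of_ord u) (nat_of_ord w)) => h hne.
- have := pos_lt hu h; set D := #|A|; case: ifPn => ?; case: ifPn => ?; lia.
- have := pos_lt hw h; set D := #|A|; case: ifPn => ?; case: ifPn => ?; lia.
- lia.
Qed.

Lemma sp_sym n (A : {set 'I_n}) u w :
  u \in A -> w \in A -> u != w -> sp A u w + sp A w u = #|A|.
Proof. by move=> hu hw huw; rewrite -!span_sp // ?span_sym // eq_sym. Qed.

Lemma local_to_3 n (A : {set 'I_n}) :
  3 <= n -> 2 <= #|A| -> local_maximizer A ->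
  (odd #|A| -> forall x, x \in sigmastar A (#|A| ./2) -> 1 <= x <= n./2) /\
  (~~ odd #|A| -> forall x, x \in sigmastar A (#|A| ./2) ->
                   (x == n./2) || (x == uphalf n)).
Proof.
move=> hn hm hloc; split.
- move=> hodd x /mem_sigmastar [p [q [hp hq hpq hk ->]]].
  have hs := span_sym hp hq hpq.
  have e := dstar_sym hpq; have hqp : q != p by rewrite eq_sym.
  have h0 : 0 < dstar p q by rewrite lt0n dstar_eq0.
  rewrite h0 /=; case: (leqP (dstar p q) n./2) => // hlt; exfalso.
  apply: (@no_short n A q p) => //; first lia.
  apply/and4P; split => //.
  + rewrite -span_sp //; apply/eqP; lia.
  + rewrite /cc; lia.
- move=> hev x /mem_sigmastar [p [q [hp hq hpq hk ->]]].
  have hs := span_sym hp hq hpq.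
  have e := dstar_sym hpq; have hqp : q != p by rewrite eq_sym.
  case: (boolP ((dstar p q == n./2) || (dstar p q == uphalf n))) => // hne; exfalso.
  case: (leqP ((dstar p q).*2 + 2) n) => h2.
  + apply: (@no_short n A p q) => //; first lia.
    apply/and4P; split => //.
    * rewrite -span_sp //; apply/eqP; lia.
    * rewrite /cc; lia.
  + apply: (@no_short n A q p) => //; first lia.
    apply/and4P; split => //.
    * rewrite -span_sp //; apply/eqP; lia.
    * rewrite /cc; lia.
Qed.

Lemma exists_sp n (A : {set 'I_n}) u j :
  u \in A -> 0 < j < #|A| -> exists w, [/\ w \in A, w != u & sp A u w = j].
Proof.
move=> hu hj.
have [w hw hr] : exists2 w, w \in A :\ u & rk (A :\ u) (dstar u) w = j.
  apply: rk_ex; first exact: dstar_inj.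
  have := cardsD1 u A; rewrite hu; set D := #|A :\ u|; lia.
by move: (hw); rewrite !inE => /andP[h1 h2]; exists w.
Qed.

Lemma sp_le_iff n (A : {set 'I_n}) u w w' :
  w \in A -> w != u -> w' \in A -> w' != u ->
  (sp A u w <= sp A u w') = (dstar u w <= dstar u w').
Proof. by move=> *; apply: rk_le; rewrite !inE; apply/andP. Qed.

Lemma sp_lt_iff n (A : {set 'I_n}) u w w' :
  w \in A -> w != u -> w' \in A -> w' != u ->
  (sp A u w < sp A u w') = (dstar u w < dstar u w').
Proof. by move=> *; apply: rk_lt; rewrite !inE; apply/andP. Qed.

Definition cond3 n (A : {set 'I_n}) :=
  (odd #|A| -> forall x, x \in sigmastar A (#|A| ./2) -> 1 <= x <= n./2) /\
  (~~ odd #|A| -> forall x, x \in sigmastar A (#|A| ./2) ->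
                   (x == n./2) || (x == uphalf n)).

Lemma cond3_core n (A : {set 'I_n}) u w :
  2 <= #|A| -> cond3 A -> u \in A -> w \in A -> w != u -> (sp A u w).*2 < #|A| ->
  (dstar u w).*2 <= n.
Proof.
move=> hm [ho he] hu hw hwu hsp.
have [w' [hw' hw'u hr]] := @exists_sp n A u #|A|./2 hu (ltac:(lia)).
have hin : dstar u w' \in sigmastar A #|A|./2.
  apply: sigmastar_intro => //; first by rewrite eq_sym.
  by rewrite span_sp // eq_sym.
case: (boolP (odd #|A|)) => hodd.
- have := ho hodd _ hin.
  have : sp A u w <= sp A u w' by rewrite hr; lia.
  rewrite sp_le_iff //; lia.
- have := he hodd _ hin.
  have : sp A u w < sp A u w' by rewrite hr; lia.
  rewrite sp_lt_iff // => h1 /orP[] /eqP h2; lia.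
Qed.

Lemma three_to_4 n (A : {set 'I_n}) :
  3 <= n -> 2 <= #|A| -> cond3 A ->
  (forall k, 1 <= k -> k.*2 < #|A| -> perm_eq (sigma A k) (sigmastar A k)) /\
  (~~ odd #|A| -> forall x, (x \in sigma A (#|A| ./2)) = (x == n./2)).
Proof.
move=> hn hm h3; split.
- move=> k hk hkm.
  suff -> : sigma A k = sigmastar A k by apply: perm_refl.
  apply/eq_in_map => -[u w]; rewrite mem_enum /= => /and4P[hu hw huw /eqP hs].
  simpl in hu, hw, huw, hs |- *.
  have hwu : w != u by rewrite eq_sym.
  have hsp : (sp A u w).*2 < #|A| by rewrite -span_sp // hs.
  have h := cond3_core hm h3 hu hw hwu hsp.
  have e := dstar_sym huw; rewrite /dist; lia.
- move=> hev x.
  have key : forall u w, u \in A -> w \in A -> u != w -> span A u w = #|A|./2 ->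
      dist u w = n./2.
    move=> u w hu hw huw hs.
    have := h3.2 hev _ (sigmastar_intro hu hw huw hs).
    have e := dstar_sym huw; rewrite /dist => /orP[] /eqP; lia.
  apply/idP/eqP.
  + by case/mem_sigma => [u [w [hu hw huw hs ->]]]; apply: key.
  + move=> ->.
    have [u hu] : exists u, u \in A.
      by apply/set0Pn; rewrite -card_gt0; lia.
    have [w [hw hwu hr]] := @exists_sp n A u #|A|./2 hu (ltac:(lia)).
    have huw : u != w by rewrite eq_sym.
    have hs : span A u w = #|A|./2 by rewrite span_sp.
    rewrite -(key u w) //; exact: sigma_intro.
Qed.


Lemma sum_iota_eq m : 2 <= m -> \sum_(j <- iota 1 (m - 1)) (j.*2 == m : nat) = ~~ odd m.
Proof.
move=> hm.
have e : \sum_(j <- iota 1 (m - 1)) (j <= m./2 : nat) =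
         \sum_(j <- iota 1 (m - 1)) (j <= (m - 1)./2 : nat) +
         \sum_(j <- iota 1 (m - 1)) (j.*2 == m : nat).
  rewrite -big_split; apply: eq_bigr => j _ /=.
  case: eqP => h; case: leqP => h1; case: leqP => h2; lia.
rewrite !sum_iota_le in e; lia.
Qed.

Lemma sum_map_eq (T : eqType) (s : seq T) (f g : T -> nat) :
  (forall x, f x <= g x) -> \sum_(x <- s) f x = \sum_(x <- s) g x ->
  forall x, x \in s -> f x = g x.
Proof.
move=> hle; elim: s => [|a s IH] //=; rewrite !big_cons => e x hx.
have l1 : \sum_(y <- s) f y <= \sum_(y <- s) g y by apply: leq_sum.
have l2 := hle a.
have e2 : \sum_(y <- s) f y = \sum_(y <- s) g y by lia.
rewrite inE in hx; case/orP: hx => [/eqP ->|hx]; [lia | exact: IH].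
Qed.

Lemma perm_to_pt n (A : {set 'I_n}) k :
  perm_eq (sigma A k) (sigmastar A k) ->
  forall u w, u \in A -> w \in A -> u != w -> span A u w = k -> dist u w = dstar u w.
Proof.
move=> hp u w hu hw huw hk.
have hs := perm_sumn hp.
rewrite /sigma /sigmastar !sumnE !big_map in hs.
apply: (@sum_map_eq _ (enum (span_pairs A k)) (fun p => dist p.1 p.2) (fun p => dstar p.1 p.2) _ hs (u, w)).
- by move=> p; rewrite /dist geq_minl.
- by rewrite mem_enum /= inE /= hu hw huw hk eqxx.
Qed.

Definition dord n (u x : 'I_n) : 'I_n := Ordinal (dstar_lt u x).

Lemma dstar_count n (u w : 'I_n) :
  dstar u w = \sum_(x : 'I_n) ((0 < dstar u x) && (dstar u x <= dstar u w) : nat).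
Proof.
have hinj : injective (dord u).
  by move=> x y /(congr1 (@nat_of_ord n)) /= /dstar_inj.
set D := dstar u w.
have hD : D < n := dstar_lt u w.
have e := @reindex_inj _ _ _ _ (dord u) xpredT (fun i : 'I_n => ((0 < i) && (i <= D) : nat)) hinj.
transitivity (\sum_(i : 'I_n) ((0 < i) && (i <= D) : nat)); last exact: e.
rewrite -(big_mkord xpredT (fun i => ((0 < i) && (i <= D) : nat))) /= /index_iota subn0.
have hn : n = (n - 1).+1 by lia.
rewrite hn /= big_cons /=.
rewrite big_seq (eq_bigr (fun j => (j <= D : nat))); last first.
  by move=> j; rewrite mem_iota => /andP[h1 _]; rewrite h1.
rewrite -big_seq sum_iota_le //; lia.
Qed.

Definition Hs m c := \sum_(j <- iota 1 (m - 1)) ((j.*2 < m) && (c < j) : nat).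
Definition Gs m := \sum_(j <- iota 1 ((m - 1)./2)) Hs m (j - 1).
Definition cnt n (A : {set 'I_n}) (u x : 'I_n) := #|[set y in A :\ u | dstar u y < dstar u x]|.

Lemma Hs_zero m c : (m - 1)./2 <= c -> Hs m c = 0.
Proof.
move=> hc; rewrite /Hs big1_seq // => j _.
have -> : (j.*2 < m) && (c < j) = false by apply/negbTE; lia.
done.
Qed.

Lemma card_D1_sum n (A : {set 'I_n}) u (P : 'I_n -> bool) :
  #|[set y in A :\ u | P y]| = \sum_(y in A) ((y != u) && P y : nat).
Proof.
rewrite -card_sumS; apply: eq_card => y; rewrite !inE.
by case: (y != u); case: (y \in A).
Qed.

Lemma inner_b n (A : {set 'I_n}) u x : u \in A ->
  \sum_(w in A) (((u != w) && ((sp A u w).*2 < #|A|) : nat) *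
                 ((0 < dstar u x) && (dstar u x <= dstar u w) : nat))
  = if u == x then 0 else Hs #|A| (cnt A u x).
Proof.
move=> hu; case: eqP => [->|hux].
- rewrite big1 // => w _.
  by move: (dstar_eq0 x x); rewrite eqxx => /eqP ->; rewrite muln0.
- rewrite (big_setD1 u hu) /= eqxx /= mul0n add0n.
  have hx : 0 < dstar u x by rewrite lt0n dstar_eq0; apply/eqP => e; apply: hux.
  transitivity (\sum_(w in A :\ u) ((rk (A :\ u) (dstar u) w).*2 < #|A|) &&
                       (cnt A u x < rk (A :\ u) (dstar u) w) : nat).
    apply: eq_bigr => w hw.
    have hwu : u != w by move: hw; rewrite !inE eq_sym => /andP[].
    rewrite hwu hx /= (rk_thr _ (dstar u x) hw) -/(cnt A u x) /sp.
    by case: (_ < _); case: (_ < _).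
  rewrite -card_sumS (@rk_card _ (A :\ u) (dstar u) (fun j => (j.*2 < #|A|) && (cnt A u x < j)) (@dstar_inj n u)).
  by rewrite /Hs (cardsD1 u A) hu add1n subn1.
Qed.

Lemma cnt_rel n (A : {set 'I_n}) u x : u \in A -> u != x ->
  cnt A u x + 1 = rk (A :\ x) (fun y => dstar y x) u.
Proof.
move=> hu hux; rewrite /cnt /rk !card_D1_sum -(sum_eq1 hu) -big_split /=.
apply: eq_bigr => y _; have := neq_nat hux; ordb y; ordb u; ordb x; nsolve.
Qed.

Lemma sum_D1_zero n (A : {set 'I_n}) x (F : 'I_n -> nat) :
  F x = 0 -> \sum_(u in A) F u = \sum_(u in A :\ x) F u.
Proof.
move=> hF; case: (boolP (x \in A)) => hx.
- by rewrite (big_setD1 x hx) hF.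
- apply: eq_bigl => u; rewrite !inE; case: (eqVneq u x) => [->|] //=; by rewrite (negbTE hx).

Qed.

Lemma per_x n (A : {set 'I_n}) x : 2 <= #|A| ->
  \sum_(u in A) (if u == x then 0 else Hs #|A| (cnt A u x)) = Gs #|A|.
Proof.
move=> hm; rewrite (sum_D1_zero _ (x := x)); last by rewrite eqxx.
have hK : (#|A| - 1)./2 <= #|A :\ x|.
  have := cardsD1 x A; set D := #|A :\ x|; case: (x \in A) => /=; lia.
transitivity (\sum_(u in A :\ x) Hs #|A| (rk (A :\ x) (fun y => dstar y x) u - 1)).
  apply: eq_bigr => u; rewrite !inE => /andP[hux hu].
  by rewrite (negbTE hux) -(cnt_rel hu) ?addnK // eq_sym.
rewrite (@rk_sum _ (A :\ x) (fun y => dstar y x) (fun r => Hs #|A| (r - 1)) (@dstar_injl n x)).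
rewrite (@sum_iota_trunc (fun r => Hs #|A| (r - 1)) _ _ hK) //.
move=> j hj; apply: Hs_zero; lia.
Qed.

Definition H4a n (A : {set 'I_n}) := forall u w, u \in A -> w \in A -> u != w ->
  (sp A u w).*2 < #|A| -> dist u w = dstar u w.
Definition H4b n (A : {set 'I_n}) := ~~ odd #|A| -> forall u w, u \in A -> w \in A -> u != w ->
  (sp A u w).*2 = #|A| -> dist u w = n./2.

Lemma X1_eval n (A : {set 'I_n}) : 2 <= #|A| ->
  \sum_(u in A) \sum_(w in A) (((u != w) && ((sp A u w).*2 < #|A|) : nat) * dstar u w)
  = n * Gs #|A|.
Proof.
move=> hm.
transitivity (\sum_(u in A) \sum_(w in A) \sum_(x : 'I_n)
   (((u != w) && ((sp A u w).*2 < #|A|) : nat) *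
    ((0 < dstar u x) && (dstar u x <= dstar u w) : nat))).
  apply: eq_bigr => u _; apply: eq_bigr => w _.
  by rewrite [dstar u w in LHS](dstar_count u w) big_distrr.
transitivity (\sum_(x : 'I_n) \sum_(u in A) \sum_(w in A)
   (((u != w) && ((sp A u w).*2 < #|A|) : nat) *
    ((0 < dstar u x) && (dstar u x <= dstar u w) : nat))).
  transitivity (\sum_(u in A) \sum_(x : 'I_n) \sum_(w in A)
   (((u != w) && ((sp A u w).*2 < #|A|) : nat) *
    ((0 < dstar u x) && (dstar u x <= dstar u w) : nat))).
    by apply: eq_bigr => u _; exact: exchange_big.
  exact: exchange_big.
rewrite (eq_bigr (fun _ => Gs #|A|)); last first.
  move=> x _; rewrite -(per_x x hm); apply: eq_bigr => u hu; exact: inner_b.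
by rewrite sum_nat_const card_ord.
Qed.

Lemma X3_eval n (A : {set 'I_n}) : 2 <= #|A| ->
  \sum_(u in A) \sum_(w in A) (((u != w) && ((sp A u w).*2 == #|A|) : nat) * n./2)
  = #|A| * ((~~ odd #|A|) * n./2).
Proof.
move=> hm.
rewrite (eq_bigr (fun _ => (~~ odd #|A|) * n./2)) ?sum_nat_const //.
move=> u hu; rewrite -big_distrl /=; congr (_ * _).
rewrite (sum_D1_zero _ (x := u)); last by rewrite eqxx.
rewrite (eq_bigr (fun w => ((rk (A :\ u) (dstar u) w).*2 == #|A| : nat))); last first.
  by move=> w; rewrite !inE eq_sym => /andP[-> _].
rewrite -card_sumS (@rk_card _ (A :\ u) (dstar u) (fun j => j.*2 == #|A|) (@dstar_inj n u)).
have hC : #|A :\ u| = #|A| - 1 by rewrite [in RHS](cardsD1 u A) hu add1n subn1.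
by rewrite hC sum_iota_eq.
Qed.

Lemma W_E n (A : {set 'I_n}) : 2 <= #|A| -> H4a A -> H4b A ->
  (W A).*2 = 2 * (n * Gs #|A|) + #|A| * ((~~ odd #|A|) * n./2).
Proof.
move=> hm ha hb; rewrite W2.
pose F1 := fun u w : 'I_n => ((u != w) && ((sp A u w).*2 < #|A|) : nat) * dstar u w.
pose F3 := fun u w : 'I_n => ((u != w) && ((sp A u w).*2 == #|A|) : nat) * n./2.
transitivity (\sum_(u in A) \sum_(w in A) (F1 u w + F1 w u + F3 u w)).
  apply: eq_bigr => u hu; apply: eq_bigr => w hw; rewrite /F1 /F3.
  case: (eqVneq u w) => [->|huw]; first by rewrite /= dist_uu ?eqxx /=.
  have hwu : w != u by rewrite eq_sym.
  have hs := sp_sym hu hw huw.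
  rewrite /=.
  case: (ltngtP (sp A u w).*2 #|A|) => h.
  - rewrite (_ : (sp A w u).*2 < #|A| = false); last by apply/negbTE; lia.
    rewrite ha //=; lia.
  - have h2 : (sp A w u).*2 < #|A| by lia.
    rewrite h2 dist_sym (ha w u) //=; lia.
  - rewrite (_ : (sp A w u).*2 < #|A| = false); last by apply/negbTE; lia.
    rewrite hb //=; [by rewrite !mul0n mul1n | by rewrite -h odd_double].
have s1 : \sum_(u in A) \sum_(w in A) (F1 u w + F1 w u + F3 u w) =
   \sum_(u in A) \sum_(w in A) F1 u w + \sum_(u in A) \sum_(w in A) F1 w u +
   \sum_(u in A) \sum_(w in A) F3 u w.
  by rewrite -!big_split; apply: eq_bigr => u _; rewrite -!big_split.
have s2 : \sum_(u in A) \sum_(w in A) F1 w u = \sum_(u in A) \sum_(w in A) F1 u w.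
  exact: exchange_big.
rewrite s1 s2 /F1 /F3 X1_eval // X3_eval //.
set a := n * Gs #|A|; set b := #|A| * _; lia.
Qed.


Lemma max_to_local n (A : {set 'I_n}) : maximizer A -> local_maximizer A.
Proof.
move=> hmax u v hu hv _; apply: hmax.
rewrite /perturbation setUC cardsU1 !inE (negbTE hv) andbF /=.
by rewrite [in RHS](cardsD1 u A) hu.
Qed.

Definition cond4 n (A : {set 'I_n}) :=
  (forall k, 1 <= k -> k.*2 < #|A| -> perm_eq (sigma A k) (sigmastar A k)) /\
  (~~ odd #|A| -> forall x, (x \in sigma A (#|A| ./2)) = (x == n./2)).

Lemma four_to_H n (A : {set 'I_n}) : cond4 A -> H4a A /\ H4b A.
Proof.
move=> [h1 h2]; split.
- move=> u w hu hw huw hsp.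
  have hwu : w != u by rewrite eq_sym.
  have [hp _] := sp_bound hu hw hwu.
  apply: (perm_to_pt (h1 _ hp hsp)) => //; exact: span_sp.
- move=> hev u w hu hw huw hsp.
  have hs : span A u w = #|A|./2 by rewrite span_sp //; lia.
  have := sigma_intro hu hw huw hs; rewrite h2 // => /eqP.
  done.
Qed.

Lemma four_W n (A : {set 'I_n}) : 2 <= #|A| -> cond4 A ->
  (W A).*2 = 2 * (n * Gs #|A|) + #|A| * ((~~ odd #|A|) * n./2).
Proof. by move=> hm /four_to_H [ha hb]; apply: W_E. Qed.

Lemma four_to_max n (A : {set 'I_n}) : 3 <= n -> 2 <= #|A| -> cond4 A -> maximizer A.
Proof.
move=> hn hm h4.
case: (@arg_maxnP _ A (fun B : {set 'I_n} => #|B| == #|A|) (@W n) (eqxx _)) => M /eqP hM hmax.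
have hMmax : maximizer M by move=> B hB; apply: hmax; rewrite hB hM.
have hM2 : 2 <= #|M| by rewrite hM.
have h3 := local_to_3 hn hM2 (max_to_local hMmax).
have h4M := three_to_4 hn hM2 h3.
have e1 := four_W hM2 h4M; have e2 := four_W hm h4.
rewrite hM -e2 in e1.
have eW : W M = W A by apply: double_inj.
by move=> B hB; rewrite -eW; apply: hmax; rewrite hB.
Qed.

Unset Implicit Arguments.

Theorem mainTheorem13 (n : nat) (A : {set 'I_n}) :
  3 <= n -> 2 <= #|A| -> #|A| <= n ->
  [<-> maximizer A;
       local_maximizer A;
       (odd #|A| -> forall x, x \in sigmastar A (#|A| ./2) -> 1 <= x <= n./2) /\
       (~~ odd #|A| -> forall x, x \in sigmastar A (#|A| ./2) ->
                        (x == n./2) || (x == uphalf n));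
       (forall k, 1 <= k -> k.*2 < #|A| -> perm_eq (sigma A k) (sigmastar A k)) /\
       (~~ odd #|A| -> forall x, (x \in sigma A (#|A| ./2)) = (x == n./2))].
Proof.
move=> hn hm _.
tfae.
- exact: max_to_local.
- exact: local_to_3.
- exact: three_to_4.
- exact: four_to_max.
Qed.
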